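(* Let $A_1,\dots,A_n$ be arbitrary groups with $n\ge 2$, let $G\subset A_1\times\dots\times A_n$ be the subgroup generated by a finite set $S=\{s_1,\dots,s_k\}$, and let $p_i:G\to A_i$ be the projections. Assume that for each $i$ there is a finite set $R_i$ of words on $S\cup S^{-1}$ with $p_i(G)=RF_{na}(\langle S\mid R_i\rangle)$. Let $$\tilde R=[R_n^{S_0},[R_{n-1}^{S_0},\dots[R_3^{S_0},[R_2^{S_0},R_1]]\dots]].$$ Then $\tilde R$ is a finite set of $na$-equations for $RF_{na}(G)$ over $S$, i.e. $RF_{na}(G)=RF_{na}(\langle S\mid\tilde R\rangle)$.
   Context: $\mathbb F$ denotes a non-abelian free group and $F(S)$ the free group on $S$. For a group $H$, $RF_{na}(H)$ is the quotient of $H$ by the intersection of the kernels of all homomorphisms $H\to\mathbb F$ with non-abelian image. An equality such as $p_i(G)=RF_{na}(\langle S\mid R_i\rangle)$ means there is an isomorphism commuting with the natural projections from $F(S)$ (here $s_j\mapsto p_i(s_j)$); similarly for the conclusion, where $F(S)\to G$ sends $s_j$ to $s_j$. Notation: $S_0=S\cup\{1\}$; for sets $R,R'$ of words on $S\cup S^{-1}$, $R^{S_0}$ is the set of words obtained by conjugating elements of $R$ by elements of $S_0$, and $[R^{S_0},R']$ is the set of commutators $[u,v]$ with $u\in R^{S_0}$, $v\in R'$. *)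

(* Defs.v *)
From mathcomp Require Import all_boot.
Set Implicit Arguments. Unset Strict Implicit. Unset Printing Implicit Defensive.

Record group := Group {
  gcar :> Type;
  gmul : gcar -> gcar -> gcar;
  gone : gcar;
  ginv : gcar -> gcar;
  gmulA : forall x y z, gmul x (gmul y z) = gmul (gmul x y) z;
  gmul1g : forall x, gmul gone x = x;
  gmulg1 : forall x, gmul x gone = x;
  gmulVg : forall x, gmul (ginv x) x = gone;
  gmulgV : forall x, gmul x (ginv x) = gone
}.

(* a letter (j, b) stands for s_j if b = false and s_j^{-1} if b = true *)
Definition word (k : nat) := seq ('I_k * bool).

Definition word_inv k (w : word k) : word k :=
  rev (map (fun l => (l.1, ~~ l.2)) w).

Definition gen_word k (j : 'I_k) : word k := [:: (j, false)].

Definition word_conj k (u v : word k) : word k := word_inv v ++ u ++ v.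

Definition word_comm k (u v : word k) : word k :=
  word_inv u ++ word_inv v ++ u ++ v.

(* R^{S_0}: conjugates of elements of R by elements of S_0 = S ∪ {1} *)
Definition conjS0 k (R : seq (word k)) : seq (word k) :=
  R ++ [seq word_conj r (gen_word j) | r <- R, j <- enum 'I_k].

Definition comm_set k (R R' : seq (word k)) : seq (word k) :=
  [seq word_comm u v | u <- R, v <- R'].

(* R_1, ..., R_n indexed by 'I_n (0-based); Rnat m = R_(m+1) *)
Definition Rnat n k (R : 'I_n -> seq (word k)) (m : nat) : seq (word k) :=
  if insub m is Some i then R i else [::].

Fixpoint Rtilde_aux n k (R : 'I_n -> seq (word k)) (m : nat) : seq (word k) :=
  match m with
  | 0 => Rnat R 0
  | m'.+1 => comm_set (conjS0 (Rnat R m)) (Rtilde_aux R m')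
  end.

(* R~ = [R_n^{S_0}, [R_(n-1)^{S_0}, ... [R_2^{S_0}, R_1] ...]] *)
Definition Rtilde n k (R : 'I_n -> seq (word k)) : seq (word k) :=
  Rtilde_aux R n.-1.

Definition geval (A : group) k (g : 'I_k -> A) (w : word k) : A :=
  foldr (fun l acc => gmul (if l.2 then ginv (g l.1) else g l.1) acc)
        (gone A) w.

(* letters (x, e): generator x (false = a, true = b), inverted iff e *)
Definition fletter := (bool * bool)%type.
Definition fword := seq fletter.
Definition finv_letter (l : fletter) : fletter := (l.1, ~~ l.2).
Definition finv (w : fword) : fword := rev (map finv_letter w).

(* free reduction; reduced words are the elements of 𝔽 *)
Definition fpush (l : fletter) (w : fword) : fword :=
  if w is l' :: w' then (if l' == finv_letter l then w' else l :: w) else [:: l].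
Definition freduce (w : fword) : fword := foldr fpush [::] w.

Definition feval k (phi : 'I_k -> fword) (w : word k) : fword :=
  freduce (flatten (map (fun l => if l.2 then finv (phi l.1) else phi l.1) w)).

Definition nonab_image k (phi : 'I_k -> fword) : Prop :=
  exists u v : word k, feval phi (u ++ v) <> feval phi (v ++ u).

(* phi kills every relator of R (i.e. factors through <S | R>) *)
Definition kills k (phi : 'I_k -> fword) (R : seq (word k)) : Prop :=
  forall r, r \in R -> feval phi r = [::].

(* w lies in the kernel of F(S) -> RF_na(<S | R>) *)
Definition ker_RFna_pres k (R : seq (word k)) (w : word k) : Prop :=
  forall phi : 'I_k -> fword, kills phi R -> nonab_image phi -> feval phi w = [::].

(* G = <s_1,...,s_k> ⊂ A_1 × ... × A_n : w = 1 in G *)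
Definition trivial_in_G n (A : 'I_n -> group) k (s : 'I_k -> forall i, A i)
  (w : word k) : Prop :=
  forall i : 'I_n, geval (fun j => s j i) w = gone (A i).

(* phi : F(S) -> 𝔽 factors through F(S) -> G (i.e. is a hom G -> 𝔽) *)
Definition factors_through_G n (A : 'I_n -> group) k (s : 'I_k -> forall i, A i)
  (phi : 'I_k -> fword) : Prop :=
  forall u : word k, trivial_in_G s u -> feval phi u = [::].

(* w lies in the kernel of F(S) -> G -> RF_na(G) *)
Definition ker_RFna_G n (A : 'I_n -> group) k (s : 'I_k -> forall i, A i)
  (w : word k) : Prop :=
  forall phi : 'I_k -> fword,
    factors_through_G s phi -> nonab_image phi -> feval phi w = [::].

(* Main.v *)
Require Import Defs.
From mathcomp Require Import all_boot.
From Stdlib Require Import ZArith Lia Classical.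
Set Implicit Arguments. Unset Strict Implicit. Unset Printing Implicit Defensive.

Section Mat.
Local Open Scope Z_scope.

Record mat := Mat { m11 : Z; m12 : Z; m21 : Z; m22 : Z }.
Definition mmul (P Q : mat) : mat :=
  Mat (m11 P * m11 Q + m12 P * m21 Q) (m11 P * m12 Q + m12 P * m22 Q)
      (m21 P * m11 Q + m22 P * m21 Q) (m21 P * m12 Q + m22 P * m22 Q).
Definition mI := Mat 1 0 0 1.
Definition mN := Mat (-1) 0 0 (-1).
Definition madj (P : mat) := Mat (m22 P) (- m12 P) (- m21 P) (m11 P).
Definition mdet P := m11 P * m22 P - m12 P * m21 P.
Definition gam2 P := [&& Z.odd (m11 P), ~~ Z.odd (m12 P), ~~ Z.odd (m21 P) & Z.odd (m22 P)].
Definition good P := mdet P = 1 /\ gam2 P.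

Ltac mat_ring := repeat match goal with P : mat |- _ => destruct P end;
  rewrite /mmul /madj /mI /mdet; cbn [m11 m12 m21 m22]; f_equal; ring.

Lemma mmulA P Q R : mmul P (mmul Q R) = mmul (mmul P Q) R.
Proof. mat_ring. Qed.
Lemma mmul1m P : mmul mI P = P. Proof. mat_ring. Qed.
Lemma mmulm1 P : mmul P mI = P. Proof. mat_ring. Qed.
Lemma madj_mul P Q : madj (mmul P Q) = mmul (madj Q) (madj P).
Proof. mat_ring. Qed.
Lemma madjK P : madj (madj P) = P. Proof. destruct P; unfold madj; cbn [m11 m12 m21 m22]; f_equal; ring. Qed.
Lemma madjI : madj mI = mI. Proof. reflexivity. Qed.
Lemma mdet_mul P Q : mdet (mmul P Q) = mdet P * mdet Q.
Proof. destruct P, Q; unfold mdet, mmul; cbn [m11 m12 m21 m22]; ring. Qed.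
Lemma mdet_adj P : mdet (madj P) = mdet P.
Proof. destruct P; unfold mdet, madj; cbn [m11 m12 m21 m22]; ring. Qed.
Lemma mmul_adj P : mdet P = 1 -> mmul P (madj P) = mI.
Proof. destruct P; unfold mdet, mmul, madj, mI; cbn [m11 m12 m21 m22] => H; f_equal; lia. Qed.
Lemma madj_mul_l P : mdet P = 1 -> mmul (madj P) P = mI.
Proof. destruct P; unfold mdet, mmul, madj, mI; cbn [m11 m12 m21 m22] => H; f_equal; lia. Qed.

Lemma gam2_mul P Q : gam2 P -> gam2 Q -> gam2 (mmul P Q).
Proof.
destruct P as [a b c d], Q as [e f g h]; rewrite /gam2 /mmul ; cbn [m11 m12 m21 m22].
rewrite !Z.odd_add !Z.odd_mul.
by case: (Z.odd a); case: (Z.odd b); case: (Z.odd c); case: (Z.odd d);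
   case: (Z.odd e); case: (Z.odd f); case: (Z.odd g); case: (Z.odd h).
Qed.
Lemma gam2_adj P : gam2 P -> gam2 (madj P).
Proof.
destruct P as [a b c d]; rewrite /gam2 /madj ; cbn [m11 m12 m21 m22]; rewrite !Z.odd_opp.
by case: (Z.odd a); case: (Z.odd b); case: (Z.odd c); case: (Z.odd d).
Qed.
Lemma good_mul P Q : good P -> good Q -> good (mmul P Q).
Proof. move=> [h1 h2] [h3 h4]; split; [rewrite mdet_mul h1 h3 //| exact: gam2_mul]. Qed.
Lemma good_adj P : good P -> good (madj P).
Proof. move=> [h1 h2]; split; [rewrite mdet_adj //| exact: gam2_adj]. Qed.
Lemma good_I : good mI. Proof. by split. Qed.

Definition mcomm P Q := mmul P Q = mmul Q P.
Definition vx P := m11 P - m22 P.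
Definition par P Q := vx P * m12 Q = m12 P * vx Q /\ vx P * m21 Q = m21 P * vx Q
   /\ m12 P * m21 Q = m21 P * m12 Q.
Definition nonscalar P := ~ (vx P = 0 /\ m12 P = 0 /\ m21 P = 0).

Lemma mcomm_par P Q : mcomm P Q <-> par P Q.
Proof.
destruct P as [a b c d], Q as [e f g h]; rewrite /mcomm /par /vx /mmul ; cbn [m11 m12 m21 m22].
split.
- move=> H; injection H; lia.
- move=> [H1 [H2 H3]]; f_equal; lia.
Qed.

Lemma h4 m pi pj qi qj xi xj pm qm : m*pi = xi*pm -> m*qj = xj*qm -> m*pj = xj*pm -> m*qi = xi*qm -> m*m*(pi*qj - pj*qi) = 0.
Proof.
move=> E1 E2 E3 E4.
replace (m*m*(pi*qj-pj*qi)) with ((m*pi)*(m*qj) - (m*pj)*(m*qi)) by ring.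
rewrite E1 E2 E3 E4; ring.
Qed.

Lemma par_trans X P Q : nonscalar X -> par X P -> par X Q -> par P Q.
Proof.
destruct X as [a b c d], P as [e f g h], Q as [i j k l];
rewrite /nonscalar /par /vx ; cbn [m11 m12 m21 m22].
set x := a - d; set p := e - h; set q := i - l.
move=> NS [H1 [H2 H3]] [H4 [H5 H6]].
have K: forall m, m <> 0 -> m * m * (p * j - f * q) = 0 /\ m * m * (p * k - g * q) = 0
   /\ m * m * (f * k - g * j) = 0 -> (p * j = f * q /\ p * k = g * q /\ f * k = g * j).
  move=> m Hm [E1 [E2 E3]].
  have Hmm : m * m <> 0 by nia.
  repeat split; apply: (Z.mul_reg_l _ _ (m * m)) => //; lia.
have [Hx|Hx] := Z.eq_dec x 0; last first.
  apply: (K x Hx); split; [|split].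
  - apply: (@h4 x _ _ _ _ x b p q); lia.
  - apply: (@h4 x _ _ _ _ x c p q); lia.
  - apply: (@h4 x _ _ _ _ b c p q); lia.
have [Hb|Hb] := Z.eq_dec b 0; last first.
  apply: (K b Hb); split; [|split].
  - apply: (@h4 b _ _ _ _ x b f j); lia.
  - apply: (@h4 b _ _ _ _ x c f j); lia.
  - apply: (@h4 b _ _ _ _ b c f j); lia.
have [Hc|Hc] := Z.eq_dec c 0; last first.
  apply: (K c Hc); split; [|split].
  - apply: (@h4 c _ _ _ _ x b g k); lia.
  - apply: (@h4 c _ _ _ _ x c g k); lia.
  - apply: (@h4 c _ _ _ _ b c g k); lia.
by exfalso; apply: NS.
Qed.

Definition gcd3 (a b c : Z) := Z.gcd (Z.gcd a b) c.

Lemma gcd3_mul k a b c : gcd3 (k*a) (k*b) (k*c) = Z.abs k * gcd3 a b c.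
Proof.
rewrite /gcd3 Z.gcd_mul_mono_l -(Z.gcd_abs_r _ (k*c)) Z.abs_mul.
rewrite Z.gcd_mul_mono_l Z.abs_involutive Z.gcd_abs_r //.
Qed.

Lemma gcd3_dvd z a b c : (z | a) -> (z | b) -> (z | c) -> (z | gcd3 a b c).
Proof. move=> ha hb hc; rewrite /gcd3; apply: Z.gcd_greatest => //; exact: Z.gcd_greatest. Qed.

Lemma gcd3_div a b c : (gcd3 a b c | a) /\ (gcd3 a b c | b) /\ (gcd3 a b c | c).
Proof.
rewrite /gcd3; split; [|split].
- apply: Z.divide_trans (Z.gcd_divide_l _ _) (Z.gcd_divide_l _ _).
- apply: Z.divide_trans (Z.gcd_divide_l _ _) (Z.gcd_divide_r _ _).
- exact: Z.gcd_divide_r.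
Qed.

Lemma gcd3_nonneg a b c : 0 <= gcd3 a b c.
Proof. exact: Z.gcd_nonneg. Qed.

Lemma gcd3_0 a b c : gcd3 a b c = 0 -> a = 0 /\ b = 0 /\ c = 0.
Proof. rewrite /gcd3 => /Z.gcd_eq_0 [/Z.gcd_eq_0 [? ?] ?]; tauto. Qed.

Lemma absk k k' x1 x2 x3 y1 y2 y3 : ~(x1=0/\x2=0/\x3=0) ->
  gcd3 x1 x2 x3 = gcd3 y1 y2 y3 -> k * y1 = k' * x1 -> k * y2 = k' * x2 -> k * y3 = k' * x3 ->
  Z.abs k = Z.abs k'.
Proof.
move=> NZ Hg E1 E2 E3.
have := gcd3_mul k y1 y2 y3; rewrite E1 E2 E3 gcd3_mul -Hg => H.
have Hg0 : gcd3 x1 x2 x3 <> 0 by move=> /gcd3_0.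
apply: (Z.mul_reg_r _ _ (gcd3 x1 x2 x3)) => //; lia.
Qed.

Lemma scale3 x1 x2 x3 y1 y2 y3 : ~(x1=0/\x2=0/\x3=0) ->
  gcd3 x1 x2 x3 = gcd3 y1 y2 y3 -> x1*y2 = x2*y1 -> x1*y3 = x3*y1 -> x2*y3 = x3*y2 ->
  (y1=x1/\y2=x2/\y3=x3) \/ (y1 = -x1 /\ y2 = -x2 /\ y3 = -x3).
Proof.
move=> NZ Hg E1 E2 E3.
have fin : forall k k', k <> 0 -> k * y1 = k' * x1 -> k * y2 = k' * x2 -> k * y3 = k' * x3 ->
  (y1=x1/\y2=x2/\y3=x3) \/ (y1 = -x1 /\ y2 = -x2 /\ y3 = -x3).
  move=> k k' Hk F1 F2 F3.
  have [Ek|Ek] := Z.abs_eq_cases _ _ (absk NZ Hg F1 F2 F3); subst k.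
  - by left; repeat split; apply: (Z.mul_reg_l _ _ k') => //; lia.
  - by right; repeat split; apply: (Z.mul_reg_l _ _ k') => //; lia.
have [H1|H1] := Z.eq_dec x1 0; last by apply: (fin x1 y1) => //; lia.
have [H2|H2] := Z.eq_dec x2 0; last by apply: (fin x2 y2) => //; lia.
have [H3|H3] := Z.eq_dec x3 0; last by apply: (fin x3 y3) => //; lia.
by exfalso; apply: NZ.
Qed.

Definition mconj G M := mmul (mmul (madj G) M) G.

Lemma mconj_vec G M :
  vx (mconj G M) = vx M * (m11 G * m22 G + m12 G * m21 G) + 2 * m12 M * m21 G * m22 G - 2 * m21 M * m11 G * m12 G
  /\ m12 (mconj G M) = vx M * m22 G * m12 G + m12 M * m22 G * m22 G - m21 M * m12 G * m12 G
  /\ m21 (mconj G M) = - vx M * m21 G * m11 G - m12 M * m21 G * m21 G + m21 M * m11 G * m11 G.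
Proof. destruct G, M; rewrite /mconj /vx /mmul /madj; cbn [m11 m12 m21 m22]; split; [|split]; ring. Qed.

Lemma dvd3 z p b c u v w : (z | p) -> (z | b) -> (z | c) -> (z | p*u + b*v + c*w).
Proof.
move=> hp hb hc; apply: Z.divide_add_r; [apply: Z.divide_add_r|]; exact: Z.divide_mul_l.
Qed.

Lemma gcd3_conj G M : (gcd3 (vx M) (m12 M) (m21 M) | gcd3 (vx (mconj G M)) (m12 (mconj G M)) (m21 (mconj G M))).
Proof.
have [d1 [d2 d3]] := gcd3_div (vx M) (m12 M) (m21 M).
have [e1 [e2 e3]] := mconj_vec G M.
apply: gcd3_dvd; [rewrite e1|rewrite e2|rewrite e3].
- have -> : vx M * (m11 G * m22 G + m12 G * m21 G) + 2 * m12 M * m21 G * m22 G - 2 * m21 M * m11 G * m12 G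
   = vx M * (m11 G * m22 G + m12 G * m21 G) + m12 M * (2 * m21 G * m22 G) + m21 M * (- 2 * m11 G * m12 G) by ring.
  exact: dvd3.
- have -> : vx M * m22 G * m12 G + m12 M * m22 G * m22 G - m21 M * m12 G * m12 G
   = vx M * (m22 G * m12 G) + m12 M * (m22 G * m22 G) + m21 M * (- m12 G * m12 G) by ring.
  exact: dvd3.
- have -> : - vx M * m21 G * m11 G - m12 M * m21 G * m21 G + m21 M * m11 G * m11 G
   = vx M * (- m21 G * m11 G) + m12 M * (- m21 G * m21 G) + m21 M * (m11 G * m11 G) by ring.
  exact: dvd3.
Qed.

Lemma mconj_adj G M : mdet G = 1 -> mconj (madj G) (mconj G M) = M.
Proof.
move=> H; rewrite /mconj madjK.
rewrite -!mmulA (mmul_adj H) mmulm1 !mmulA (mmul_adj H) mmul1m //.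
Qed.

Lemma mconj_tr G M : m11 (mconj G M) + m22 (mconj G M) = mdet G * (m11 M + m22 M).
Proof. destruct G, M; rewrite /mconj /mdet /mmul /madj; cbn [m11 m12 m21 m22]; ring. Qed.

Lemma mat_eq P Q : vx P = vx Q -> m12 P = m12 Q -> m21 P = m21 Q -> m11 P + m22 P = m11 Q + m22 Q -> P = Q.
Proof. destruct P, Q; rewrite /vx; cbn [m11 m12 m21 m22] => *; f_equal; lia. Qed.

Lemma gam2_tr G : good G -> m11 G + m22 G <> 0.
Proof.
destruct G as [e f g h]; rewrite /good /gam2 /mdet; cbn [m11 m12 m21 m22].
move=> [Hd /and4P [He Hf Hg Hh]] Ht.
move/Z.odd_spec: He => [x Hx]. move/Z.odd_spec: Hh => [y Hy].
move: Hf; rewrite Z.negb_odd => /Z.even_spec [u Hu].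
move: Hg; rewrite Z.negb_odd => /Z.even_spec [v Hv].
subst; nia.
Qed.

Lemma F2m Y G : good G -> nonscalar Y -> mcomm Y (mconj G Y) -> mcomm Y G.
Proof.
move=> gG NS /mcomm_par [P1 [P2 P3]].
have dG : mdet G = 1 by case: gG.
have Hg : gcd3 (vx Y) (m12 Y) (m21 Y) = gcd3 (vx (mconj G Y)) (m12 (mconj G Y)) (m21 (mconj G Y)).
  apply: Z.divide_antisym_nonneg; try exact: gcd3_nonneg; first exact: gcd3_conj.
  by have := gcd3_conj (madj G) (mconj G Y); rewrite mconj_adj.
have Htr := mconj_tr G Y; rewrite dG Z.mul_1_l in Htr.
have GY : mmul G (mconj G Y) = mmul Y G.
  by rewrite /mconj !mmulA (mmul_adj dG) mmul1m.
have [[E1 [E2 E3]]|[E1 [E2 E3]]] := scale3 NS Hg P1 P2 P3.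
- have EY : mconj G Y = Y by apply: mat_eq.
  by rewrite /mcomm -GY EY.
- have EY : mconj G Y = madj Y.
    by apply: mat_eq; rewrite ?E1 ?E2 ?E3 //; rewrite /vx /madj; cbn [m11 m12 m21 m22]; lia.
  rewrite EY in GY.
  exfalso; apply: (gam2_tr gG).
  move: NS GY; destruct Y as [a b c d], G as [e f g h];
  rewrite /nonscalar /vx /mmul /madj; cbn [m11 m12 m21 m22] => NS GY.
  injection GY => F4 F3 F2 F1.
  have Q1 : (a - d) * (e + h) = 0 by lia.
  have Q2 : b * (e + h) = 0 by lia.
  have Q3 : c * (e + h) = 0 by lia.
  have [H1|H1] := Z.eq_dec (a - d) 0; last by move/Z.mul_eq_0: Q1 => [|]; lia.
  have [H2|H2] := Z.eq_dec b 0; last by move/Z.mul_eq_0: Q2 => [|]; lia.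
  have [H3|H3] := Z.eq_dec c 0; last by move/Z.mul_eq_0: Q3 => [|]; lia.
  by exfalso; apply: NS.
Qed.
End Mat.

Section M2.
Local Open Scope Z_scope.

Lemma KLm k X Y (G : 'I_k -> mat) : (forall j, good (G j)) -> nonscalar X -> nonscalar Y ->
  mcomm X Y -> (forall j, mcomm X (mconj (G j) Y)) -> forall j j', mcomm (G j) (G j').
Proof.
move=> gG NX NY /mcomm_par XY XG j j'.
have YG : forall j, par Y (G j).
  move=> i; apply/mcomm_par; apply: F2m => //; apply/mcomm_par.
  by apply: par_trans NX XY _; apply/mcomm_par.
by apply/mcomm_par; apply: par_trans NY (YG j) (YG j').
Qed.

Lemma mcomm_adj M P : mcomm M P -> mcomm M (madj P).
Proof.
destruct M as [a b c d], P as [e f g h]; rewrite /mcomm /mmul /madj; cbn [m11 m12 m21 m22] => H.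
injection H => *; f_equal; lia.
Qed.

Lemma mcomm_mul M P Q : mcomm M P -> mcomm M Q -> mcomm M (mmul P Q).
Proof. rewrite /mcomm => h1 h2; by rewrite mmulA h1 -mmulA h2 mmulA. Qed.

Lemma mcomm_sym M P : mcomm M P -> mcomm P M.
Proof. by rewrite /mcomm. Qed.

Lemma mcomm_I M : mcomm M mI.
Proof. by rewrite /mcomm mmul1m mmulm1. Qed.

Lemma nonscalar_good P : mdet P = 1 -> P <> mI -> P <> mN -> nonscalar P.
Proof.
destruct P as [a b c d]; rewrite /nonscalar /vx /mdet /mI /mN; cbn [m11 m12 m21 m22].
move=> D N1 N2 [H1 [H2 H3]]; subst.
have : a * a = 1 by nia.
move=> /Z.eq_mul_1 [Ha|Ha]; [apply: N1 | apply: N2]; f_equal; lia.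
Qed.

Lemma comm_word U T : mdet U = 1 -> mdet T = 1 ->
  (mmul (madj U) (mmul (madj T) (mmul U T)) = mI <-> mcomm U T).
Proof.
move=> dU dT; split.
- move=> H; rewrite /mcomm.
  have := f_equal (mmul (mmul T U)) H.
  rewrite mmulm1 => <-.
  by rewrite !mmulA -(mmulA T U) (mmul_adj dU) mmulm1 (mmul_adj dT) mmul1m.
- rewrite /mcomm => ->.
  by rewrite !mmulA -(mmulA (madj U)) (madj_mul_l dT) mmulm1 (madj_mul_l dU).
Qed.

Definition Ml (l : fletter) : mat :=
  match l with
  | (false, false) => Mat 1 2 0 1
  | (false, true) => Mat 1 (-2) 0 1
  | (true, false) => Mat 1 0 2 1
  | (true, true) => Mat 1 0 (-2) 1
  end.
Definition Mf (w : fword) : mat := foldr (fun l acc => mmul (Ml l) acc) mI w.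

Lemma Ml_inv l : mmul (Ml l) (Ml (finv_letter l)) = mI.
Proof. by case: l => [[] []]; rewrite /mmul /mI; cbn; f_equal. Qed.
Lemma Ml_adj l : Ml (finv_letter l) = madj (Ml l).
Proof. by case: l => [[] []]. Qed.
Lemma good_Ml l : good (Ml l).
Proof. by case: l => [[] []]; split. Qed.

Lemma Mf_cat u v : Mf (u ++ v) = mmul (Mf u) (Mf v).
Proof. elim: u => [|l u IH] /=; first by rewrite mmul1m. by rewrite IH mmulA. Qed.

Lemma Mf_fpush l w : Mf (fpush l w) = mmul (Ml l) (Mf w).
Proof.
case: w => [|l' w] //=.
case: eqP => [->|] //=.
by rewrite mmulA Ml_inv mmul1m.
Qed.

Lemma Mf_freduce w : Mf (freduce w) = Mf w.
Proof. elim: w => [|l w IH] //=. by rewrite Mf_fpush IH. Qed.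

Lemma Mf_rcons s x : Mf (rcons s x) = mmul (Mf s) (Ml x).
Proof. by rewrite -cats1 Mf_cat /= mmulm1. Qed.

Lemma Mf_finv w : Mf (Defs.finv w) = madj (Mf w).
Proof.
elim: w => [|l w IH] //=.
by move: IH; rewrite /Defs.finv map_cons rev_cons Mf_rcons => ->; rewrite madj_mul Ml_adj.
Qed.

Lemma good_Mf w : good (Mf w).
Proof. elim: w => [|l w IH] /=; [exact: good_I| exact: good_mul (good_Ml l) IH]. Qed.

End M2.

Definition frel (l l' : fletter) : bool := l' != finv_letter l.
Definition red (w : fword) := sorted frel w.

Lemma red_fpush l w : red w -> red (fpush l w).
Proof.
case: w => [|l' w] //=.
case: eqP => [E|NE]; first by move/path_sorted.
by move=> H; rewrite /= /frel H andbT; apply/eqP.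
Qed.

Lemma red_freduce w : red (freduce w).
Proof. elim: w => [|l w IH] //=; exact: red_fpush. Qed.

Lemma finv_letterK l : finv_letter (finv_letter l) = l.
Proof. by case: l => a b; rewrite /finv_letter /= negbK. Qed.

Lemma red_finv w : red w -> red (Defs.finv w).
Proof.
rewrite /red /Defs.finv rev_sorted sorted_map.
have E : forall x y, (relpre finv_letter (fun z => frel^~ z)) x y = frel x y.
  move=> x y /=; rewrite /frel.
  apply/idP/idP => /eqP H; apply/eqP => E; apply: H.
  - by rewrite -E finv_letterK.
  - by rewrite E finv_letterK.
case: w => [|l w] //=; by rewrite (eq_path E).
Qed.

Section Faith.
Local Open Scope Z_scope.

Definition region (l : fletter) (v : Z * Z) : Prop :=
  let x := v.1 in let y := v.2 in
  match l with
  | (false,false) => (x > y /\ y > 0) \/ (x < y /\ y < 0)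
  | (false,true) => (x > 0 /\ y < 0 /\ x > - y) \/ (x < 0 /\ y > 0 /\ - x > y)
  | (true,false) => (y > x /\ x > 0) \/ (y < x /\ x < 0)
  | (true,true) => (y > 0 /\ x < 0 /\ y > - x) \/ (y < 0 /\ x > 0 /\ - y > x)
  end.

Definition app (M : mat) (v : Z * Z) := (m11 M * v.1 + m12 M * v.2, m21 M * v.1 + m22 M * v.2).

Lemma app_mul P Q v : app (mmul P Q) v = app P (app Q v).
Proof.
destruct P as [a b c d], Q as [e f g h], v as [x y]; rewrite /app /mmul; cbn [m11 m12 m21 m22 fst snd].
f_equal; ring.
Qed.

Definition v0 (l : fletter) : Z * Z := if l.1 then (1,0) else (0,1).

Lemma reg_step l l' v : region l' v -> frel l l' -> region l (app (Ml l) v).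
Proof.
case: v => x y.
case: l => [[] []]; case: l' => [[] []] => R F; move/eqP: F => F; try (by exfalso; apply: F);
  move: R; rewrite /region /app; cbn [m11 m12 m21 m22 fst snd Ml]; lia.
Qed.

Lemma reg_start l : region l (app (Ml l) (v0 l)).
Proof. case: l => [[] []]; rewrite /region /app /v0; cbn [m11 m12 m21 m22 fst snd Ml]; lia. Qed.

Lemma reg_main w l : red (l :: w) -> region l (app (Mf (l :: w)) (v0 (last l w))).
Proof.
elim: w l => [|l' w IH] l.
  by move=> _; rewrite /= mmulm1; apply: reg_start.
rewrite /red /= => /andP [H1 H2].
have := IH l' H2; rewrite /= => R.
rewrite app_mul; exact: reg_step R H1.
Qed.

Lemma faithful w : red w -> w <> [::] -> Mf w <> mI /\ Mf w <> mN.
Proof.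
case: w => [|l w] // R _.
have := reg_main R.
case: (last l w) => [[] []]; rewrite /v0 /=;
split => E; move: H; rewrite E /region /app /mI /mN; cbn [m11 m12 m21 m22 fst snd];
case: l {R E} => [[] []]; cbn; lia.
Qed.

End Faith.

Lemma red_cat s x y t : red (rcons s x) -> red (y :: t) -> frel x y -> red (rcons s x ++ y :: t).
Proof.
rewrite /red; case: s => [|z s] /=.
  by move=> _ -> ->.
rewrite cat_path last_rcons => -> /= -> -> //.
Qed.

Lemma Mf_inj a b : red a -> red b -> Mf a = Mf b -> a = b.
Proof.
elim: a b => [|l a IH] [|l' b] Ra Rb E //.
- by exfalso; have [] := faithful Rb => //; rewrite -E.
- by exfalso; have [] := faithful Ra => //; rewrite E.
- case: (l =P l') => [El|NE].
  + subst l'; congr (_ :: _); apply: IH; [exact: path_sorted Ra|exact: path_sorted Rb|].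
    move: E => /= E.
    have := f_equal (mmul (madj (Ml l))) E.
    have [d _] := good_Ml l.
    by rewrite !mmulA (madj_mul_l d) !mmul1m.
  + exfalso.
    set c := Defs.finv (l :: a) ++ l' :: b.
    have Rc : red c.
      rewrite /c /Defs.finv map_cons rev_cons; apply: red_cat => //.
      * rewrite -rev_cons -map_cons; exact: red_finv.
      * by rewrite /frel finv_letterK; apply/eqP => E'; apply: NE.
    have [F _] : Mf c <> mI /\ Mf c <> mN by apply: faithful => //; rewrite /c; case: (Defs.finv (l :: a)).
    apply: F; rewrite /c Mf_cat Mf_finv -E.
    have [d _] := good_Mf (l :: a).
    exact: madj_mul_l.
Qed.

Section Words.
Variable k : nat.
Variable phi : 'I_k -> fword.

Definition Gm j := Mf (phi j).
Definition lm (l : 'I_k * bool) := if l.2 then madj (Gm l.1) else Gm l.1.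
Definition Mw (w : word k) := foldr (fun l acc => mmul (lm l) acc) mI w.

Lemma Mf_feval w : Mf (feval phi w) = Mw w.
Proof.
rewrite /feval Mf_freduce.
elim: w => [|l w IH] //=.
rewrite Mf_cat IH /lm /Gm; case: l.2 => //; by rewrite Mf_finv.
Qed.

Lemma feval_nil w : feval phi w = [::] <-> Mw w = mI.
Proof.
split; first by move=> E; rewrite -Mf_feval E.
move=> E; apply: Mf_inj => //; first exact: red_freduce.
by rewrite Mf_feval E.
Qed.

Lemma feval_eq u v : feval phi u = feval phi v <-> Mw u = Mw v.
Proof.
split; first by move=> E; rewrite -!Mf_feval E.
move=> E; apply: Mf_inj; try exact: red_freduce.
by rewrite !Mf_feval E.
Qed.

Lemma Mw_cat u v : Mw (u ++ v) = mmul (Mw u) (Mw v).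
Proof. elim: u => [|l u IH] /=; first by rewrite mmul1m. by rewrite IH mmulA. Qed.

Lemma good_lm l : good (lm l).
Proof. rewrite /lm /Gm; case: l.2; [apply: good_adj|]; exact: good_Mf. Qed.

Lemma good_Mw w : good (Mw w).
Proof. elim: w => [|l w IH] /=; [exact: good_I| exact: good_mul (good_lm l) IH]. Qed.

Lemma Mw_neqN w : Mw w <> mN.
Proof.
rewrite -Mf_feval.
case E: (feval phi w) => [|l w'] //.
have [] := faithful (red_freduce _ : red (feval phi w)); by rewrite E.
Qed.

Lemma Mw_inv u : Mw (word_inv u) = madj (Mw u).
Proof.
elim: u => [|l u IH] //=.
rewrite /word_inv map_cons rev_cons -cats1 Mw_cat -/(word_inv u) IH /= mmulm1 madj_mul.
congr (mmul _ _); rewrite /lm /=; case: l.2 => //=; by rewrite madjK.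
Qed.

Lemma Mw_conj r j : Mw (word_conj r (gen_word j)) = mconj (Gm j) (Mw r).
Proof.
by rewrite /word_conj !Mw_cat Mw_inv /= /lm /= !mmulm1 /mconj mmulA.
Qed.

Lemma Mw_comm u v : Mw (word_comm u v) = mmul (madj (Mw u)) (mmul (madj (Mw v)) (mmul (Mw u) (Mw v))).
Proof. by rewrite /word_comm !Mw_cat !Mw_inv. Qed.

Lemma feval_comm_nil u v : feval phi (word_comm u v) = [::] <-> mcomm (Mw u) (Mw v).
Proof.
rewrite feval_nil Mw_comm; apply: comm_word.
- by case: (good_Mw u).
- by case: (good_Mw v).
Qed.

Lemma all_comm : (forall j j', mcomm (Gm j) (Gm j')) -> forall u v, mcomm (Mw u) (Mw v).
Proof.
move=> H.
have H1 : forall v j, mcomm (Gm j) (Mw v).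
  move=> v j; elim: v => [|l v IH] /=; first exact: mcomm_I.
  apply: mcomm_mul => //; rewrite /lm; case: l.2; [apply: mcomm_adj|]; exact: H.
have H2 : forall u v, mcomm (Mw v) (Mw u).
  move=> u v; elim: u => [|l u IH] /=; first exact: mcomm_I.
  apply: mcomm_mul => //; rewrite /lm; case: l.2; [apply: mcomm_adj|]; exact: mcomm_sym.
move=> u v; exact: mcomm_sym.
Qed.

Lemma KL r t : feval phi r <> [::] -> feval phi t <> [::] ->
  feval phi (word_comm r t) = [::] ->
  (forall j, feval phi (word_comm (word_conj r (gen_word j)) t) = [::]) ->
  ~ nonab_image phi.
Proof.
move=> Nr Nt /feval_comm_nil C1 C2 [u [v NE]].
have NS : forall w, feval phi w <> [::] -> nonscalar (Mw w).
  move=> w Nw; apply: nonscalar_good.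
  - by case: (good_Mw w).
  - by move=> E; apply: Nw; apply/feval_nil.
  - exact: Mw_neqN.
have AC : forall j j', mcomm (Gm j) (Gm j').
  apply: (@KLm k (Mw t) (Mw r)).
  - move=> j; exact: good_Mf.
  - exact: NS.
  - exact: NS.
  - exact: mcomm_sym.
  - move=> j; apply: mcomm_sym; rewrite -Mw_conj; apply/feval_comm_nil; exact: C2.
apply: NE; apply/feval_eq; rewrite !Mw_cat; exact: all_comm.
Qed.

End Words.

Section Grp.
Variable A : group.

Lemma inv_uniq (x y : A) : gmul x y = gone A -> y = ginv x.
Proof.
move=> H; rewrite -(gmul1g y) -(gmulVg x) -gmulA H gmulg1 //.
Qed.

Lemma ginv_mul (x y : A) : ginv (gmul x y) = gmul (ginv y) (ginv x).
Proof.
apply: esym; apply: inv_uniq.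
by rewrite -gmulA (gmulA y) gmulgV gmul1g gmulgV.
Qed.

Lemma ginvK (x : A) : ginv (ginv x) = x.
Proof. apply: esym; apply: inv_uniq; exact: gmulVg. Qed.

Lemma ginv1 : ginv (gone A) = gone A.
Proof. apply: esym; apply: inv_uniq; exact: gmul1g. Qed.

Variable k : nat.
Variable g : 'I_k -> A.

Lemma geval_cat u v : geval g (u ++ v) = gmul (geval g u) (geval g v).
Proof. elim: u => [|l u IH] /=; first by rewrite gmul1g. by rewrite IH gmulA. Qed.

Lemma geval_inv u : geval g (word_inv u) = ginv (geval g u).
Proof.
elim: u => [|l u IH] /=; first by rewrite ginv1.
rewrite /word_inv map_cons rev_cons -cats1 geval_cat -/(word_inv u) IH /= gmulg1 ginv_mul.
by case: l.2 => //=; rewrite ginvK.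
Qed.

Lemma geval_comm_l u v : geval g u = gone A -> geval g (word_comm u v) = gone A.
Proof.
move=> H; rewrite /word_comm !geval_cat !geval_inv H ginv1 !gmul1g gmulVg //.
Qed.

Lemma geval_comm_r u v : geval g v = gone A -> geval g (word_comm u v) = gone A.
Proof.
move=> H; rewrite /word_comm !geval_cat !geval_inv H ginv1 !gmul1g gmulg1 gmulVg //.
Qed.

Lemma geval_conj u w : geval g u = gone A -> geval g (word_conj u w) = gone A.
Proof.
move=> H; rewrite /word_conj !geval_cat !geval_inv H gmul1g gmulVg //.
Qed.
End Grp.

Section Mem.
Variable k : nat.
Implicit Types R : seq (word k).

Lemma conjS0_R r R : r \in R -> r \in conjS0 R.
Proof. by move=> H; rewrite /conjS0 mem_cat H. Qed.

Lemma conjS0_conj r R j : r \in R -> word_conj r (gen_word j) \in conjS0 R.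
Proof.
move=> H; rewrite /conjS0 mem_cat; apply/orP; right.
by apply: (allpairs_f (fun r j => word_conj r (gen_word j))) => //; rewrite mem_enum.
Qed.

Lemma conjS0P x R : x \in conjS0 R -> x \in R \/ exists r j, r \in R /\ x = word_conj r (gen_word j).
Proof.
rewrite /conjS0 mem_cat => /orP [->|/allpairsP [[r j] [/= Hr _ ->]]]; first by left.
by right; exists r, j.
Qed.

Lemma comm_set_f u v R R' : u \in R -> v \in R' -> word_comm u v \in comm_set R R'.
Proof. move=> hu hv; exact: (allpairs_f (@word_comm k)). Qed.

Lemma comm_setP x R R' : x \in comm_set R R' -> exists u v, [/\ u \in R, v \in R' & x = word_comm u v].
Proof. by move/allpairsP => [[u v] [/= hu hv ->]]; exists u, v. Qed.
End Mem.

Section Kill.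
Variable k : nat.
Variable phi : 'I_k -> fword.

Lemma kill_comm_l u v : feval phi u = [::] -> feval phi (word_comm u v) = [::].
Proof.
move/feval_nil => H; apply/feval_comm_nil; rewrite H; apply: mcomm_sym; exact: mcomm_I.
Qed.

Lemma kill_comm_r u v : feval phi v = [::] -> feval phi (word_comm u v) = [::].
Proof.
move/feval_nil => H; apply/feval_comm_nil; rewrite H; exact: mcomm_I.
Qed.

Lemma kill_conj r j : feval phi r = [::] -> feval phi (word_conj r (gen_word j)) = [::].
Proof.
move/feval_nil => H; apply/feval_nil; rewrite Mw_conj H /mconj mmulm1.
apply: madj_mul_l; by case: (good_Mf (phi j)).
Qed.

Lemma kill_conjS0 R : kills phi R -> kills phi (conjS0 R).
Proof.
move=> H x /conjS0P [/H //|[r [j [Hr ->]]]]; exact: kill_conj (H _ Hr).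
Qed.

Variable n : nat.
Variable R : 'I_n -> seq (word k).

Lemma Rnat_ord (i : 'I_n) : Rnat R i = R i.
Proof. by rewrite /Rnat valK. Qed.

Lemma up m0 : kills phi (Rnat R m0) -> forall m, m0 <= m -> kills phi (Rtilde_aux R m).
Proof.
move=> H0; elim=> [|m IH] Hm.
  by move: Hm; rewrite leqn0 => /eqP E; subst m0; exact: H0.
move=> x /= /comm_setP [u [v [hu hv ->]]].
case: (ltngtP m0 m.+1) Hm => // [Hlt|Heq] _.
- by apply: kill_comm_r; apply: IH hv.
- by apply: kill_comm_l; apply: (kill_conjS0 _ hu); rewrite -Heq.
Qed.

Lemma down m : nonab_image phi -> kills phi (Rtilde_aux R m) -> exists i, i <= m /\ kills phi (Rnat R i).
Proof.
move=> NA; elim: m => [|m IH] H; first by exists 0.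
case: (boolP (all (fun r => feval phi r == [::]) (Rnat R m.+1))) => [/allP Hall|/allPn [r hr Nr]].
  by exists m.+1; split => // r /Hall /eqP.
have [i [Hi Hk]] : exists i, i <= m /\ kills phi (Rnat R i).
  apply: IH => t ht.
  apply: NNPP => Nt; apply: (@KL k phi r t) => //.
  - by move/eqP: Nr.
  - by apply: H; apply: comm_set_f => //; apply: conjS0_R.
  - by move=> j; apply: H; apply: comm_set_f => //; apply: conjS0_conj.
by exists i; split => //; apply: leqW.
Qed.

End Kill.

Lemma part1 n (A : 'I_n -> group) k (s : 'I_k -> forall i : 'I_n, A i) (phi : 'I_k -> fword) :
  0 < n -> factors_through_G s phi -> nonab_image phi ->
  exists i : 'I_n, forall u, geval (fun j => s j i) u = gone (A i) -> feval phi u = [::].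
Proof.
move=> n0 Hf NA; apply: NNPP => NE.
have W : forall i : 'I_n, exists u, geval (fun j => s j i) u = gone (A i) /\ feval phi u <> [::].
  move=> i; apply: NNPP => N; apply: NE; exists i => u Hu; apply: NNPP => Nu.
  by apply: N; exists u.
have C : forall m, m < n -> exists c, (forall i : 'I_n, i <= m -> geval (fun j => s j i) c = gone (A i))
        /\ feval phi c <> [::].
  elim=> [|m IH] Hm.
    have [u [Hu Nu]] := W (Ordinal Hm); exists u; split => // i.
    rewrite leqn0 => /eqP Ei.
    by have -> : i = Ordinal Hm by apply: val_inj.
  have [c [Hc Nc]] := IH (ltnW Hm).
  have [u [Hu Nu]] := W (Ordinal Hm).
  have [u' [Hu' Nu']] : exists u', geval (fun j => s j (Ordinal Hm)) u' = gone (A (Ordinal Hm))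
      /\ feval phi (word_comm u' c) <> [::].
    case: (classic (feval phi (word_comm u c) = [::])) => H1; last by exists u.
    case: (classic (exists j, feval phi (word_comm (word_conj u (gen_word j)) c) <> [::])) => [[j Hj]|H2].
      by exists (word_conj u (gen_word j)); split => //; apply: geval_conj.
    exfalso; apply: (@KL k phi u c) => // j.
    by apply: NNPP => N; apply: H2; exists j.
  exists (word_comm u' c); split => // i Hi.
  case: (ltngtP i m.+1) Hi => // [Hlt|Heq] _.
  - by apply: geval_comm_r; apply: Hc.
  - have -> : i = Ordinal Hm by apply: val_inj.
    exact: geval_comm_l.
have Hn1 : n.-1 < n by rewrite prednK.
have [c [Hc Nc]] := C n.-1 Hn1.
apply: Nc; apply: Hf => i; apply: Hc.
by rewrite -ltnS prednK.
Qed.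

Theorem mainTheorem9 (n : nat) (A : 'I_n -> group) (k : nat)
  (s : 'I_k -> forall i : 'I_n, A i) (R : 'I_n -> seq (word k)) :
  2 <= n ->
  (* p_i(G) = RF_na(<S | R_i>) compatibly with the projections from F(S) *)
  (forall (i : 'I_n) (w : word k),
      geval (fun j => s j i) w = gone (A i) <-> ker_RFna_pres (R i) w) ->
  (* RF_na(G) = RF_na(<S | R~>) compatibly with the projections from F(S) *)
  forall w : word k, ker_RFna_G s w <-> ker_RFna_pres (Rtilde R) w.
Proof.
move=> n2 H.
have n0 : 0 < n by apply: leq_trans n2.
have Key : forall phi, nonab_image phi -> (factors_through_G s phi <-> kills phi (Rtilde R)).
  move=> phi NA; split.
  - move=> Hf.
    have [i Hi] := part1 n0 Hf NA.
    have Ki : kills phi (Rnat R i).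
      rewrite Rnat_ord => r hr; apply: Hi; apply/H => psi Kp _; exact: Kp.
    apply: (up Ki); by rewrite -ltnS prednK.
  - move=> Hk.
    have [i [Hi Ki]] := down NA Hk.
    have Hin : i < n by rewrite -(prednK n0) ltnS.
    move: Ki; rewrite -[i]/(nat_of_ord (Ordinal Hin)) Rnat_ord => Ki.
    move=> u Hu; apply: (proj1 (H (Ordinal Hin) u) (Hu _)) => //.
move=> w; split => Hw phi H1 H2; apply: Hw => //; by apply/Key.
Qed.
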